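(* The two morphisms \[\mathbb{P}^1\times\mathbb{P}^1 \to \mathbb{P}^3,\quad [x_0:x_1]\times[y_0:y_1] \mapsto [x_0y_0^2 : x_1y_0^2 + 2x_0y_0y_1 : 2x_1y_0y_1 + x_0y_1^2 : x_1y_1^2],\] and \[\mathbb{P}^2\times\mathbb{P}^2 \to \mathbb{P}^8,\quad [x_0:x_1:x_2]\times[y_0:y_1:y_2] \mapsto [x_0y_0^2 : x_1y_1^2 : x_2y_2^2 : x_0y_1^2 + 2x_1y_0y_1 : x_1y_2^2 + 2x_2y_1y_2 : x_2y_0^2 + 2x_0y_0y_2 : 2x_0y_1y_2 + 2x_1y_0y_2 + 2x_2y_0y_1 : x_1y_0^2 - x_2y_1^2 + 2x_0y_0y_1 - 2x_1y_1y_2 : x_1y_0^2 - x_0y_2^2 + 2x_0y_0y_1 - 2x_2y_0y_2]\] are injective. In particular, $\operatorname{injdim}(\mathbb{P}^1\times\mathbb{P}^1,\mathcal{O}(1,2)) = 3$ and $\operatorname{injdim}(\mathbb{P}^2\times\mathbb{P}^2,\mathcal{O}(1,2)) \leq 8$.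
   Context: Over $\mathbb{C}$. For a line bundle $\mathscr{L}$ on a projective variety $X$ and a nonzero subspace $V \subseteq H^0(X,\mathscr{L})$, $\varphi_V \colon X \dashrightarrow \mathbb{P}(V^* )$ is the rational map given by the sections in $V$; $\operatorname{injdim}(X,\mathscr{L}) := \inf\{\dim V - 1 : \varphi_V \text{ is an injective morphism}\}$. *)

(* Defs.v *)
From mathcomp Require Import all_boot all_algebra.
From mathcomp Require Import reals complex.
From mathcomp Require Import mpoly.

Set Implicit Arguments.
Unset Strict Implicit.
Unset Printing Implicit Defensive.

Import GRing.Theory Num.Theory.
Local Open Scope ring_scope.

(* Points of P^a are represented by nonzero vectors in C^(a+1) = 'rV_(a.+1),
   two vectors representing the same point iff they are proportional.    *)
Definition proj_eq (K : fieldType) (k : nat) (u v : 'rV[K]_k) : Prop :=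
  exists c : K, c != 0 /\ u = c *: v.

(* Polynomials in the bihomogeneous coordinates x_0..x_a, y_0..y_b of
   P^a x P^b: variable number i < a.+1 is x_i, variable a.+1 + j is y_j. *)
Definition xvar (K : fieldType) (a b k : nat) : {mpoly K[a.+1 + b.+1]} :=
  'X_(lshift b.+1 (inord k : 'I_a.+1)).
Definition yvar (K : fieldType) (a b k : nat) : {mpoly K[a.+1 + b.+1]} :=
  'X_(rshift a.+1 (inord k : 'I_b.+1)).

Definition pt (K : fieldType) (a b : nat) (x : 'rV[K]_a.+1) (y : 'rV[K]_b.+1)
  : 'I_(a.+1 + b.+1) -> K :=
  fun i => match split i with inl j => x 0 j | inr j => y 0 j end.

(* H^0(P^a x P^b, O(d1,d2)): bihomogeneous polynomials of bidegree (d1,d2). *)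
Definition bihomog (K : fieldType) (a b d1 d2 : nat)
  (p : {mpoly K[a.+1 + b.+1]}) : Prop :=
  forall m : 'X_{1.. a.+1 + b.+1}, m \in msupp p ->
    (\sum_(i < a.+1) m (lshift b.+1 i))%N = d1 /\
    (\sum_(j < b.+1) m (rshift a.+1 j))%N = d2.

Definition lin_indep (K : fieldType) (n k : nat) (s : 'I_k -> {mpoly K[n]})
  : Prop :=
  forall c : 'I_k -> K, \sum_(i < k) c i *: s i = 0 -> forall i, c i = 0.

Definition phi (K : fieldType) (a b k : nat) (s : 'I_k -> {mpoly K[a.+1 + b.+1]})
  (x : 'rV[K]_a.+1) (y : 'rV[K]_b.+1) : 'rV[K]_k :=
  \row_(i < k) (s i).@[pt x y].

(* phi_s is a morphism (no base points) and is injective on points. *)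
Definition inj_morphism (K : fieldType) (a b k : nat)
  (s : 'I_k -> {mpoly K[a.+1 + b.+1]}) : Prop :=
  (forall x y, x != 0 -> y != 0 -> phi s x y != 0) /\
  (forall x y x' y', x != 0 -> y != 0 -> x' != 0 -> y' != 0 ->
     proj_eq (phi s x y) (phi s x' y') -> proj_eq x x' /\ proj_eq y y').

(* N belongs to { dim V - 1 : V <= H^0(O(1,2)), phi_V injective morphism }:
   V is spanned by a linearly independent family s_0..s_N of sections.  *)
Definition injdim_cand (K : fieldType) (a b N : nat) : Prop :=
  exists s : 'I_N.+1 -> {mpoly K[a.+1 + b.+1]},
    (forall i, bihomog 1 2 (s i)) /\ lin_indep s /\ inj_morphism s.

Definition injdim_O12_eq (K : fieldType) (a b N : nat) : Prop :=
  injdim_cand K a b N /\ forall M, injdim_cand K a b M -> (N <= M)%N.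

Definition injdim_O12_le (K : fieldType) (a b N : nat) : Prop :=
  exists M, (M <= N)%N /\ injdim_cand K a b M.

Section Explicit.
Variable K : fieldType.
Local Notation x1 k := (xvar K 1 1 k).
Local Notation y1 k := (yvar K 1 1 k).
Definition sec1 (i : 'I_4) : {mpoly K[1.+1 + 1.+1]} :=
  nth 0 [:: x1 0 * y1 0 ^+ 2;
            x1 1 * y1 0 ^+ 2 + 2%:R * x1 0 * y1 0 * y1 1;
            2%:R * x1 1 * y1 0 * y1 1 + x1 0 * y1 1 ^+ 2;
            x1 1 * y1 1 ^+ 2] i.
Local Notation x k := (xvar K 2 2 k).
Local Notation y k := (yvar K 2 2 k).
Definition sec2 (i : 'I_9) : {mpoly K[2.+1 + 2.+1]} :=
  nth 0 [:: x 0 * y 0 ^+ 2;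
            x 1 * y 1 ^+ 2;
            x 2 * y 2 ^+ 2;
            x 0 * y 1 ^+ 2 + 2%:R * x 1 * y 0 * y 1;
            x 1 * y 2 ^+ 2 + 2%:R * x 2 * y 1 * y 2;
            x 2 * y 0 ^+ 2 + 2%:R * x 0 * y 0 * y 2;
            2%:R * x 0 * y 1 * y 2 + 2%:R * x 1 * y 0 * y 2 + 2%:R * x 2 * y 0 * y 1;
            x 1 * y 0 ^+ 2 - x 2 * y 1 ^+ 2 + 2%:R * x 0 * y 0 * y 1
              - 2%:R * x 1 * y 1 * y 2;
            x 1 * y 0 ^+ 2 - x 0 * y 2 ^+ 2 + 2%:R * x 0 * y 0 * y 1
              - 2%:R * x 2 * y 0 * y 2] i.
End Explicit.

(* Main.v *)
Require Import Defs.
From mathcomp Require Import all_boot all_algebra.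
From mathcomp Require Import reals complex.
From mathcomp Require Import mpoly.
From mathcomp Require Import ring zify.
Set Implicit Arguments.
Unset Strict Implicit.
Unset Printing Implicit Defensive.
Import GRing.Theory Num.Theory.
Local Open Scope ring_scope.

Lemma split_l m n (i : 'I_m) : split (lshift n i) = inl i.
Proof. exact: (unsplitK (inl i)). Qed.
Lemma split_r m n (i : 'I_n) : split (rshift m i) = inr i.
Proof. exact: (unsplitK (inr i)). Qed.

Section Ev.
Variable K : fieldType.
Lemma eval_xvar a b k (x : 'rV[K]_a.+1) (y : 'rV[K]_b.+1) :
  (xvar K a b k).@[pt x y] = x 0 (inord k).
Proof. by rewrite /xvar mevalXU /pt split_l. Qed.
Lemma eval_yvar a b k (x : 'rV[K]_a.+1) (y : 'rV[K]_b.+1) :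
  (yvar K a b k).@[pt x y] = y 0 (inord k).
Proof. by rewrite /yvar mevalXU /pt split_r. Qed.
End Ev.

Lemma ord2P (j : 'I_2) : j = 0 \/ j = 1.
Proof. case: j => [[|[|//]]] H; [left|right]; exact: val_inj. Qed.
Lemma ord3P (j : 'I_3) : [\/ j = 0, j = 1 | j = 2%:R].
Proof. case: j => [[|[|[|//]]]] H; [constructor 1|constructor 2|constructor 3]; exact: val_inj. Qed.

Lemma inord_0 n : (inord 0 : 'I_n.+1) = 0.
Proof. by apply: val_inj; rewrite /= inordK. Qed.
Lemma inord_1 n : (inord 1 : 'I_n.+2) = 1.
Proof. by apply: val_inj; rewrite /= inordK. Qed.
Lemma inord_2 n : (inord 2 : 'I_n.+3) = 2%:R.
Proof. by apply: val_inj; rewrite /= inordK. Qed.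


Section Scal.
Variable K : numClosedFieldType.

Lemma two_neq0 : (2%:R : K) != 0. Proof. by rewrite pnatr_eq0. Qed.
Lemma three_neq0 : (3%:R : K) != 0. Proof. by rewrite pnatr_eq0. Qed.
Lemma nine_neq0 : (9%:R : K) != 0. Proof. by rewrite pnatr_eq0. Qed.

Definition P1_0 (x0 x1 y0 y1 : K) := x0 * y0 ^+ 2.
Definition P1_1 (x0 x1 y0 y1 : K) := x1 * y0 ^+ 2 + 2%:R * x0 * y0 * y1.
Definition P1_2 (x0 x1 y0 y1 : K) := 2%:R * x1 * y0 * y1 + x0 * y1 ^+ 2.
Definition P1_3 (x0 x1 y0 y1 : K) := x1 * y1 ^+ 2.
Definition E1 (p0 p1 p2 p3 u w : K) := p0 * u^+3 + p1 * u^+2 * w + p2 * u * w^+2 + p3 * w^+3.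
Definition Du1 (p0 p1 p2 p3 u w : K) := 3%:R * p0 * u^+2 + 2%:R * p1 * u * w + p2 * w^+2.
Definition Dw1 (p0 p1 p2 p3 u w : K) := p1 * u^+2 + 2%:R * p2 * u * w + 3%:R * p3 * w^+2.

Lemma E1_F x0 x1 y0 y1 u w :
  E1 (P1_0 x0 x1 y0 y1) (P1_1 x0 x1 y0 y1) (P1_2 x0 x1 y0 y1) (P1_3 x0 x1 y0 y1) u w
  = (x0 * u + x1 * w) * (y0 * u + y1 * w) ^+ 2.
Proof. rewrite /E1 /P1_0 /P1_1 /P1_2 /P1_3; ring. Qed.
Lemma Du1_F x0 x1 y0 y1 u w :
  Du1 (P1_0 x0 x1 y0 y1) (P1_1 x0 x1 y0 y1) (P1_2 x0 x1 y0 y1) (P1_3 x0 x1 y0 y1) u w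
  = x0 * (y0 * u + y1 * w) ^+ 2 + 2%:R * (x0 * u + x1 * w) * (y0 * u + y1 * w) * y0.
Proof. rewrite /Du1 /P1_0 /P1_1 /P1_2 /P1_3; ring. Qed.
Lemma Dw1_F x0 x1 y0 y1 u w :
  Dw1 (P1_0 x0 x1 y0 y1) (P1_1 x0 x1 y0 y1) (P1_2 x0 x1 y0 y1) (P1_3 x0 x1 y0 y1) u w
  = x1 * (y0 * u + y1 * w) ^+ 2 + 2%:R * (x0 * u + x1 * w) * (y0 * u + y1 * w) * y1.
Proof. rewrite /Dw1 /P1_0 /P1_1 /P1_2 /P1_3; ring. Qed.
Lemma E1Z c p0 p1 p2 p3 u w : E1 (c*p0) (c*p1) (c*p2) (c*p3) u w = c * E1 p0 p1 p2 p3 u w.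
Proof. rewrite /E1; ring. Qed.
Lemma Du1Z c p0 p1 p2 p3 u w : Du1 (c*p0) (c*p1) (c*p2) (c*p3) u w = c * Du1 p0 p1 p2 p3 u w.
Proof. rewrite /Du1; ring. Qed.
Lemma Dw1Z c p0 p1 p2 p3 u w : Dw1 (c*p0) (c*p1) (c*p2) (c*p3) u w = c * Dw1 p0 p1 p2 p3 u w.
Proof. rewrite /Dw1; ring. Qed.

(* key: from F(z)=0, grad F(z) = 0 deduce M(z) = 0 *)
Lemma key_lm (L M x0 x1 y0 y1 : K) : (x0 != 0) || (x1 != 0) ->
  L * M ^+ 2 = 0 -> x0 * M ^+ 2 + 2%:R * L * M * y0 = 0 ->
  x1 * M ^+ 2 + 2%:R * L * M * y1 = 0 -> M = 0.
Proof.
move=> hx h1 h2 h3; case: (eqVneq M 0) => // hM.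
have hM2 : M ^+ 2 != 0 by rewrite expf_neq0.
have hL : L = 0 by move/eqP: h1; rewrite mulf_eq0 (negbTE hM2) orbF => /eqP.
move: h2 h3; rewrite hL !mulr0 !mul0r !addr0 => /eqP; rewrite mulf_eq0 (negbTE hM2) orbF.
move=> /eqP h2 /eqP; rewrite mulf_eq0 (negbTE hM2) orbF => /eqP h3.
by move: hx; rewrite h2 h3 eqxx.
Qed.

Lemma inj1_y x0 x1 y0 y1 x0' x1' y0' y1' c :
  (x0 != 0) || (x1 != 0) ->
  P1_0 x0 x1 y0 y1 = c * P1_0 x0' x1' y0' y1' ->
  P1_1 x0 x1 y0 y1 = c * P1_1 x0' x1' y0' y1' ->
  P1_2 x0 x1 y0 y1 = c * P1_2 x0' x1' y0' y1' ->
  P1_3 x0 x1 y0 y1 = c * P1_3 x0' x1' y0' y1' ->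
  y0 * y1' - y1 * y0' = 0.
Proof.
move=> hx h0 h1 h2 h3.
set u := y1'; set w := - y0'.
have hM' : y0' * u + y1' * w = 0 by rewrite /u /w; ring.
have e := E1_F x0 x1 y0 y1 u w.
have du := Du1_F x0 x1 y0 y1 u w.
have dw := Dw1_F x0 x1 y0 y1 u w.
rewrite h0 h1 h2 h3 ?E1Z ?Du1Z ?Dw1Z E1_F Du1_F Dw1_F hM' in e du dw.
have z2 : (0:K) ^+ 2 = 0 by rewrite expr2 mul0r.
rewrite z2 !(mulr0, mul0r, addr0) in e du dw.
have := key_lm hx (esym e) (esym du) (esym dw).
rewrite /u /w => <-; ring.
Qed.

Lemma prop2s (u0 u1 v0 v1 : K) : (u0 != 0) || (u1 != 0) -> (v0 != 0) || (v1 != 0) ->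
  u0 * v1 - u1 * v0 = 0 -> exists2 d, d != 0 & u0 = d * v0 /\ u1 = d * v1.
Proof.
move=> hu hv /eqP; rewrite subr_eq0 => /eqP h.
case: (eqVneq v0 0) => hv0.
  rewrite hv0 eqxx /= in hv; move: h; rewrite hv0 mulr0 => /eqP.
  rewrite mulf_eq0 (negbTE hv) orbF => /eqP hu0.
  exists (u1 / v1); last by split; [rewrite hu0 mulr0 | rewrite divfK].
  by rewrite mulf_neq0 ?invr_eq0 //; move: hu; rewrite hu0 eqxx.
exists (u0 / v0); last first.
  split; first by rewrite divfK.
  by apply: (mulIf hv0); rewrite -h mulrAC divfK.
rewrite mulf_neq0 ?invr_eq0 //; apply/negP => /eqP hu0.
move: h; rewrite hu0 mul0r => /esym/eqP; rewrite mulf_eq0 (negbTE hv0) orbF => hu1.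
by move: hu; rewrite hu0 hu1 eqxx.
Qed.

Lemma scale_cancel (d c A B : K) : d != 0 -> d^+2 * A = c * B -> A - c / d^+2 * B = 0.
Proof.
move=> hd h; have hd2 : d ^+ 2 != 0 by rewrite expf_neq0.
apply: (mulfI hd2); rewrite mulr0 mulrBr h mulrA mulrCA divff // mulr1 subrr //.
Qed.

Lemma w1_zero (w0 w1 y0 y1 : K) : (y0 != 0) || (y1 != 0) ->
  P1_0 w0 w1 y0 y1 = 0 -> P1_1 w0 w1 y0 y1 = 0 -> P1_2 w0 w1 y0 y1 = 0 ->
  P1_3 w0 w1 y0 y1 = 0 -> w0 = 0 /\ w1 = 0.
Proof.
rewrite /P1_0 /P1_1 /P1_2 /P1_3 => hy h0 h1 h2 h3.
case: (eqVneq y0 0) => hy0.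
  rewrite hy0 eqxx /= in hy; have hy2 : y1 ^+ 2 != 0 by rewrite expf_neq0.
  have hw1 : w1 = 0 by move/eqP: h3; rewrite mulf_eq0 (negbTE hy2) orbF => /eqP.
  split => //; move: h2; rewrite hw1 hy0 !mulr0 !mul0r add0r => /eqP.
  by rewrite mulf_eq0 (negbTE hy2) orbF => /eqP.
have hy2 : y0 ^+ 2 != 0 by rewrite expf_neq0.
have hw0 : w0 = 0 by move/eqP: h0; rewrite mulf_eq0 (negbTE hy2) orbF => /eqP.
split => //; move: h1; rewrite hw0 !mulr0 !mul0r addr0 => /eqP.
by rewrite mulf_eq0 (negbTE hy2) orbF => /eqP.
Qed.

Lemma inj1 x0 x1 y0 y1 x0' x1' y0' y1' c :
  (x0 != 0) || (x1 != 0) -> (y0 != 0) || (y1 != 0) -> (y0' != 0) || (y1' != 0) ->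
  c != 0 ->
  P1_0 x0 x1 y0 y1 = c * P1_0 x0' x1' y0' y1' ->
  P1_1 x0 x1 y0 y1 = c * P1_1 x0' x1' y0' y1' ->
  P1_2 x0 x1 y0 y1 = c * P1_2 x0' x1' y0' y1' ->
  P1_3 x0 x1 y0 y1 = c * P1_3 x0' x1' y0' y1' ->
  (exists2 e, e != 0 & x0 = e * x0' /\ x1 = e * x1') /\
  (exists2 d, d != 0 & y0 = d * y0' /\ y1 = d * y1').
Proof.
move=> hx hy hy' hc h0 h1 h2 h3.
have hm := inj1_y hx h0 h1 h2 h3.
have [d hd [e0 e1]] := prop2s hy hy' hm.
split; last by exists d.
have G : forall (P : K -> K -> K -> K -> K),
   (forall a b, P a b y0 y1 = d^+2 * P a b y0' y1') ->
   (forall a b a' b', P (a - c / d^+2 * a') (b - c / d^+2 * b') y0' y1' =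
        P a b y0' y1' - c / d^+2 * P a' b' y0' y1') ->
   P x0 x1 y0 y1 = c * P x0' x1' y0' y1' ->
   P (x0 - c / d^+2 * x0') (x1 - c / d^+2 * x1') y0' y1' = 0.
  move=> P hP hL h; rewrite hL; apply: scale_cancel => //; by rewrite -hP.
have g0 : P1_0 (x0 - c / d^+2 * x0') (x1 - c / d^+2 * x1') y0' y1' = 0
  by apply: G h0 => *; rewrite /P1_0 ?e0 ?e1; ring.
have g1 : P1_1 (x0 - c / d^+2 * x0') (x1 - c / d^+2 * x1') y0' y1' = 0
  by apply: G h1 => *; rewrite /P1_1 ?e0 ?e1; ring.
have g2 : P1_2 (x0 - c / d^+2 * x0') (x1 - c / d^+2 * x1') y0' y1' = 0
  by apply: G h2 => *; rewrite /P1_2 ?e0 ?e1; ring.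
have g3 : P1_3 (x0 - c / d^+2 * x0') (x1 - c / d^+2 * x1') y0' y1' = 0
  by apply: G h3 => *; rewrite /P1_3 ?e0 ?e1; ring.
have [/eqP w0 /eqP w1] := w1_zero hy' g0 g1 g2 g3.
exists (c / d^+2); first by rewrite mulf_neq0 // invr_eq0 expf_neq0.
by move: w0 w1; rewrite !subr_eq0 => /eqP -> /eqP ->.
Qed.

Definition cub (x0 x1 x2 y0 y1 y2 : K) (k : nat) : K :=
  nth 0 [:: x0 * y0 ^+ 2; x1 * y1 ^+ 2; x2 * y2 ^+ 2;
            x0 * y1 ^+ 2 + 2%:R * x1 * y0 * y1;
            x1 * y2 ^+ 2 + 2%:R * x2 * y1 * y2;
            x2 * y0 ^+ 2 + 2%:R * x0 * y0 * y2;
            2%:R * x0 * y1 * y2 + 2%:R * x1 * y0 * y2 + 2%:R * x2 * y0 * y1;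
            x1 * y0 ^+ 2 + 2%:R * x0 * y0 * y1;
            x2 * y1 ^+ 2 + 2%:R * x1 * y1 * y2;
            x0 * y2 ^+ 2 + 2%:R * x2 * y0 * y2] k.

Definition E3 (p : nat -> K) (q0 q1 q2 : K) :=
  p 0%N * q0^+3 + p 1%N * q1^+3 + p 2%N * q2^+3 + p 3%N * q0 * q1^+2
  + p 4%N * q1 * q2^+2 + p 5%N * q0^+2 * q2 + p 6%N * q0 * q1 * q2
  + p 7%N * q0^+2 * q1 + p 8%N * q1^+2 * q2 + p 9%N * q0 * q2^+2.
Definition D30 (p : nat -> K) (q0 q1 q2 : K) :=
  3%:R * p 0%N * q0^+2 + p 3%N * q1^+2 + 2%:R * p 5%N * q0 * q2 + p 6%N * q1 * q2
  + 2%:R * p 7%N * q0 * q1 + p 9%N * q2^+2.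
Definition D31 (p : nat -> K) (q0 q1 q2 : K) :=
  3%:R * p 1%N * q1^+2 + 2%:R * p 3%N * q0 * q1 + p 4%N * q2^+2 + p 6%N * q0 * q2
  + p 7%N * q0^+2 + 2%:R * p 8%N * q1 * q2.
Definition D32 (p : nat -> K) (q0 q1 q2 : K) :=
  3%:R * p 2%N * q2^+2 + 2%:R * p 4%N * q1 * q2 + p 5%N * q0^+2 + p 6%N * q0 * q1
  + p 8%N * q1^+2 + 2%:R * p 9%N * q0 * q2.

Definition dot3 (a0 a1 a2 b0 b1 b2 : K) := a0 * b0 + a1 * b1 + a2 * b2.

Section Id3.
Variables (x0 x1 x2 y0 y1 y2 q0 q1 q2 : K).
Local Notation L := (dot3 x0 x1 x2 q0 q1 q2).
Local Notation M := (dot3 y0 y1 y2 q0 q1 q2).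
Lemma E3_F : E3 (cub x0 x1 x2 y0 y1 y2) q0 q1 q2 = L * M ^+ 2.
Proof. rewrite /E3 /cub /dot3 /=; ring. Qed.
Lemma D30_F : D30 (cub x0 x1 x2 y0 y1 y2) q0 q1 q2 = x0 * M ^+ 2 + 2%:R * L * M * y0.
Proof. rewrite /D30 /cub /dot3 /=; ring. Qed.
Lemma D31_F : D31 (cub x0 x1 x2 y0 y1 y2) q0 q1 q2 = x1 * M ^+ 2 + 2%:R * L * M * y1.
Proof. rewrite /D31 /cub /dot3 /=; ring. Qed.
Lemma D32_F : D32 (cub x0 x1 x2 y0 y1 y2) q0 q1 q2 = x2 * M ^+ 2 + 2%:R * L * M * y2.
Proof. rewrite /D32 /cub /dot3 /=; ring. Qed.
End Id3.

Lemma E3_lin p p' c q0 q1 q2 :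
  E3 (fun k => p k - c * p' k) q0 q1 q2 = E3 p q0 q1 q2 - c * E3 p' q0 q1 q2.
Proof. rewrite /E3; ring. Qed.
Lemma D30_lin p p' c q0 q1 q2 :
  D30 (fun k => p k - c * p' k) q0 q1 q2 = D30 p q0 q1 q2 - c * D30 p' q0 q1 q2.
Proof. rewrite /D30; ring. Qed.
Lemma D31_lin p p' c q0 q1 q2 :
  D31 (fun k => p k - c * p' k) q0 q1 q2 = D31 p q0 q1 q2 - c * D31 p' q0 q1 q2.
Proof. rewrite /D31; ring. Qed.
Lemma D32_lin p p' c q0 q1 q2 :
  D32 (fun k => p k - c * p' k) q0 q1 q2 = D32 p q0 q1 q2 - c * D32 p' q0 q1 q2.
Proof. rewrite /D32; ring. Qed.

Lemma smoothC (q0 q1 q2 : K) :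
  2%:R * q0 * q1 + q2 ^+ 2 = 0 -> q0 ^+ 2 + 2%:R * q1 * q2 = 0 ->
  2%:R * q0 * q2 + q1 ^+ 2 = 0 -> [/\ q0 = 0, q1 = 0 & q2 = 0].
Proof.
move=> /eqP; rewrite addrC addr_eq0 => /eqP h2.
move=> /eqP; rewrite addr_eq0 => /eqP h0.
move=> /eqP; rewrite addrC addr_eq0 => /eqP h1.
have hP : 9%:R * (q0 * q1 * q2) ^+ 2 = 0.
  have e : (q0 * q1 * q2) ^+ 2 = q0 ^+ 2 * q1 ^+ 2 * q2 ^+ 2 by ring.
  have e2 : (q0 * q1 * q2) ^+ 2 = - 8%:R * (q0 * q1 * q2) ^+ 2.
    by rewrite {1}e h0 h1 h2; ring.
  have : 9%:R * (q0 * q1 * q2) ^+ 2 = (q0 * q1 * q2) ^+ 2 - (- 8%:R * (q0 * q1 * q2) ^+ 2) by ring.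
  by rewrite -e2 subrr.
move/eqP: hP; rewrite mulf_eq0 (negbTE nine_neq0) /= expf_eq0 /= !mulf_eq0.
have sq0 : forall t : K, t ^+ 2 = 0 -> t = 0.
  by move=> t /eqP; rewrite expf_eq0 /= => /eqP.
have t0 : forall a b : K, 2%:R * a * b = 0 -> a = 0 \/ b = 0.
  move=> a b /eqP; rewrite !mulf_eq0 (negbTE two_neq0) /=.
  by case/orP => /eqP; [left|right].
case/orP => [/orP[]|] /eqP hz.
- have hq2 : q2 = 0 by apply: sq0; rewrite h2 hz !(mulr0, mul0r) oppr0.
  have hq1 : q1 = 0 by apply: sq0; rewrite h1 hz !(mulr0, mul0r) oppr0.
  by [].
- have hq2 : q2 = 0 by apply: sq0; rewrite h2 hz !(mulr0, mul0r) oppr0.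
  have hq0 : q0 = 0 by apply: sq0; rewrite h0 hz !(mulr0, mul0r) oppr0.
  by [].
- have hq0 : q0 = 0 by apply: sq0; rewrite h0 hz !(mulr0, mul0r) oppr0.
  have hq1 : q1 = 0 by apply: sq0; rewrite h1 hz !(mulr0, mul0r) oppr0.
  by [].
Qed.

Lemma gradG (p : nat -> K) q0 q1 q2 :
  p 0%N = 0 -> p 1%N = 0 -> p 2%N = 0 -> p 3%N = 0 -> p 4%N = 0 -> p 5%N = 0 ->
  p 6%N = 0 -> p 7%N - p 8%N = 0 -> p 7%N - p 9%N = 0 ->
  [/\ D30 p q0 q1 q2 = p 7%N * (2%:R * q0 * q1 + q2 ^+ 2),
      D31 p q0 q1 q2 = p 7%N * (q0 ^+ 2 + 2%:R * q1 * q2) &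
      D32 p q0 q1 q2 = p 7%N * (2%:R * q0 * q2 + q1 ^+ 2)].
Proof.
move=> h0 h1 h2 h3 h4 h5 h6 /eqP h8 /eqP h9; move: h8 h9.
rewrite !subr_eq0 => /eqP h8 /eqP h9.
by rewrite /D30 /D31 /D32 h0 h1 h2 h3 h4 h5 h6 -h8 -h9; split; ring.
Qed.

Lemma prop3s (u0 u1 u2 v0 v1 v2 : K) :
  [|| u0 != 0, u1 != 0 | u2 != 0] -> [|| v0 != 0, v1 != 0 | v2 != 0] ->
  u0 * v1 - u1 * v0 = 0 -> u0 * v2 - u2 * v0 = 0 -> u1 * v2 - u2 * v1 = 0 ->
  exists2 d, d != 0 & [/\ u0 = d * v0, u1 = d * v1 & u2 = d * v2].
Proof.
move=> hu hv /eqP; rewrite subr_eq0 => /eqP h01 /eqP; rewrite subr_eq0 => /eqP h02.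
move=> /eqP; rewrite subr_eq0 => /eqP h12.
have canc : forall a b : K, b != 0 -> a * b = 0 -> a = 0.
  by move=> a b hb /eqP; rewrite mulf_eq0 (negbTE hb) orbF => /eqP.
case: (eqVneq v0 0) => hv0.
  case: (eqVneq v1 0) => hv1.
    have hv2 : v2 != 0 by move: hv; rewrite hv0 hv1 eqxx.
    have hu0 : u0 = 0 by apply: (canc _ _ hv2); rewrite h02 ?hv0 mulr0.
    have hu1 : u1 = 0 by apply: (canc _ _ hv2); rewrite h12 ?hv1 mulr0.
    exists (u2 / v2).
      by rewrite mulf_neq0 ?invr_eq0 //; move: hu; rewrite hu0 hu1 eqxx.
    by split; rewrite ?divfK // ?hu0 ?hu1 ?hv0 ?hv1 mulr0.
  have hu0 : u0 = 0 by apply: (canc _ _ hv1); rewrite h01 ?hv0 mulr0.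
  exists (u1 / v1).
    rewrite mulf_neq0 ?invr_eq0 //; apply/negP => /eqP hu1.
    have hu2 : u2 = 0 by apply: (canc _ _ hv1); rewrite -h12 hu1 mul0r.
    by move: hu; rewrite hu0 hu1 hu2 eqxx.
  split; [by rewrite hu0 hv0 mulr0 | by rewrite divfK | ].
  by apply: (mulIf hv1); rewrite -h12 mulrAC divfK.
exists (u0 / v0).
  rewrite mulf_neq0 ?invr_eq0 //; apply/negP => /eqP hu0.
  have hu1 : u1 = 0 by apply: (canc _ _ hv0); rewrite -h01 hu0 mul0r.
  have hu2 : u2 = 0 by apply: (canc _ _ hv0); rewrite -h02 hu0 mul0r.
  by move: hu; rewrite hu0 hu1 hu2 eqxx.
split; rewrite ?divfK //.
  by apply: (mulIf hv0); rewrite -h01 mulrAC divfK.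
by apply: (mulIf hv0); rewrite -h02 mulrAC divfK.
Qed.

Lemma perp (y0 y1 y2 y0' y1' y2' : K) :
  [|| y0 != 0, y1 != 0 | y2 != 0] -> [|| y0' != 0, y1' != 0 | y2' != 0] ->
  exists q : K * K * K, [/\ [|| q.1.1 != 0, q.1.2 != 0 | q.2 != 0],
     dot3 y0 y1 y2 q.1.1 q.1.2 q.2 = 0 & dot3 y0' y1' y2' q.1.1 q.1.2 q.2 = 0].
Proof.
move=> hy hy'.
set c0 := y1 * y2' - y2 * y1'; set c1 := y2 * y0' - y0 * y2'; set c2 := y0 * y1' - y1 * y0'.
case: (boolP [|| c0 != 0, c1 != 0 | c2 != 0]) => hc.
  by exists (c0, c1, c2); split; [exact: hc| |]; rewrite /dot3 /= /c0 /c1 /c2; ring.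
move: hc; rewrite !negb_or !negbK => /and3P [/eqP e0 /eqP e1 /eqP e2].
have [d hd [f0 f1 f2]] : exists2 d, d != 0 & [/\ y0' = d * y0, y1' = d * y1 & y2' = d * y2].
  apply: prop3s => //.
  - by rewrite -oppr0 -e2 /c2; ring.
  - by rewrite -e1 /c1; ring.
  - by rewrite -oppr0 -e0 /c0; ring.
have hq : exists q : K * K * K, [|| q.1.1 != 0, q.1.2 != 0 | q.2 != 0] /\
     dot3 y0 y1 y2 q.1.1 q.1.2 q.2 = 0.
  case: (boolP ((y0 != 0) || (y1 != 0))) => h.
    exists (y1, - y0, 0); split; last by rewrite /dot3 /=; ring.
    by case/orP: h => h /=; rewrite ?oppr_eq0 h ?orbT.
  move: h hy; rewrite negb_or => /andP [/negPn/eqP -> /negPn/eqP ->]; rewrite eqxx /= => h.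
  exists (1, 0, 0); split; first by rewrite /= oner_eq0.
  by rewrite /dot3 /=; ring.
case: hq => q [hq1 hq2]; exists q; split => //.
by rewrite f0 f1 f2 /dot3 -[RHS](mulr0 d) -hq2 /dot3; ring.
Qed.

Lemma step12 x0 x1 x2 y0 y1 y2 x0' x1' x2' y0' y1' y2' c :
  [|| y0 != 0, y1 != 0 | y2 != 0] -> [|| y0' != 0, y1' != 0 | y2' != 0] ->
  (forall k, (k < 7)%N -> cub x0 x1 x2 y0 y1 y2 k = c * cub x0' x1' x2' y0' y1' y2' k) ->
  cub x0 x1 x2 y0 y1 y2 7 - cub x0 x1 x2 y0 y1 y2 8
    = c * (cub x0' x1' x2' y0' y1' y2' 7 - cub x0' x1' x2' y0' y1' y2' 8) ->
  cub x0 x1 x2 y0 y1 y2 7 - cub x0 x1 x2 y0 y1 y2 9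
    = c * (cub x0' x1' x2' y0' y1' y2' 7 - cub x0' x1' x2' y0' y1' y2' 9) ->
  forall k, (k < 10)%N -> cub x0 x1 x2 y0 y1 y2 k = c * cub x0' x1' x2' y0' y1' y2' k.
Proof.
move=> hy hy' hlow h8 h9.
pose G := fun k => cub x0 x1 x2 y0 y1 y2 k - c * cub x0' x1' x2' y0' y1' y2' k.
have hG : forall k, (k < 7)%N -> G k = 0.
  by move=> k hk; rewrite /G hlow // subrr.
have hG8 : G 7%N - G 8%N = 0.
  have -> : G 7%N - G 8%N = (cub x0 x1 x2 y0 y1 y2 7 - cub x0 x1 x2 y0 y1 y2 8)
    - c * (cub x0' x1' x2' y0' y1' y2' 7 - cub x0' x1' x2' y0' y1' y2' 8) by rewrite /G; ring.
  by rewrite h8 subrr.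
have hG9 : G 7%N - G 9%N = 0.
  have -> : G 7%N - G 9%N = (cub x0 x1 x2 y0 y1 y2 7 - cub x0 x1 x2 y0 y1 y2 9)
    - c * (cub x0' x1' x2' y0' y1' y2' 7 - cub x0' x1' x2' y0' y1' y2' 9) by rewrite /G; ring.
  by rewrite h9 subrr.
have [[[q0 q1] q2] [/= hq hd hd']] := perp hy hy'.
have [g0 g1 g2] := gradG q0 q1 q2 (hG 0%N isT) (hG 1%N isT) (hG 2%N isT) (hG 3%N isT)
  (hG 4%N isT) (hG 5%N isT) (hG 6%N isT) hG8 hG9.
have z2 : (0:K) ^+ 2 = 0 by rewrite expr2 mul0r.
rewrite /G D30_lin D30_F D30_F hd hd' z2 !(mulr0, mul0r, addr0, subrr) in g0.
rewrite /G D31_lin D31_F D31_F hd hd' z2 !(mulr0, mul0r, addr0, subrr) in g1.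
rewrite /G D32_lin D32_F D32_F hd hd' z2 !(mulr0, mul0r, addr0, subrr) in g2.
have h7 : G 7%N = 0.
  case: (eqVneq (G 7%N) 0) => // hne.
  have canc : forall a : K, 0 = G 7%N * a -> a = 0.
    by move=> a /esym/eqP; rewrite mulf_eq0 (negbTE hne) /= => /eqP.
  have [e0 e1 e2] := smoothC (canc _ g0) (canc _ g1) (canc _ g2).
  by move: hq; rewrite e0 e1 e2 eqxx.
have e8 : G 8%N = 0 by move: hG8; rewrite h7 sub0r => /eqP; rewrite oppr_eq0 => /eqP.
have e9 : G 9%N = 0 by move: hG9; rewrite h7 sub0r => /eqP; rewrite oppr_eq0 => /eqP.
have hGall : forall k, (k < 10)%N -> G k = 0.
  move=> k; case: (ltnP k 7) => [hk _|hk1 hk2]; first exact: hG.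
  have : k = 7%N \/ k = 8%N \/ k = 9%N by lia.
  by case=> [->|[->|->]].
by move=> k /hGall /eqP; rewrite /G subr_eq0 => /eqP.
Qed.

Lemma key3 (L M x0 x1 x2 y0 y1 y2 : K) : [|| x0 != 0, x1 != 0 | x2 != 0] ->
  L * M ^+ 2 = 0 -> x0 * M ^+ 2 + 2%:R * L * M * y0 = 0 ->
  x1 * M ^+ 2 + 2%:R * L * M * y1 = 0 -> x2 * M ^+ 2 + 2%:R * L * M * y2 = 0 -> M = 0.
Proof.
move=> hx h1 h2 h3 h4; case: (eqVneq M 0) => // hM.
have hM2 : M ^+ 2 != 0 by rewrite expf_neq0.
have hL : L = 0 by move/eqP: h1; rewrite mulf_eq0 (negbTE hM2) orbF => /eqP.
move: h2 h3 h4; rewrite hL !mulr0 !mul0r !addr0.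
move=> /eqP; rewrite mulf_eq0 (negbTE hM2) orbF => /eqP e0.
move=> /eqP; rewrite mulf_eq0 (negbTE hM2) orbF => /eqP e1.
move=> /eqP; rewrite mulf_eq0 (negbTE hM2) orbF => /eqP e2.
by move: hx; rewrite e0 e1 e2 eqxx.
Qed.

Lemma ext0 (p : nat -> K) q0 q1 q2 : (forall k, (k < 10)%N -> p k = 0) ->
  [/\ E3 p q0 q1 q2 = 0, D30 p q0 q1 q2 = 0, D31 p q0 q1 q2 = 0 & D32 p q0 q1 q2 = 0].
Proof.
move=> h; rewrite /E3 /D30 /D31 /D32 !h //; split; ring.
Qed.

Lemma zeroM x0 x1 x2 y0 y1 y2 x0' x1' x2' y0' y1' y2' c q0 q1 q2 :
  [|| x0 != 0, x1 != 0 | x2 != 0] ->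
  (forall k, (k < 10)%N -> cub x0 x1 x2 y0 y1 y2 k = c * cub x0' x1' x2' y0' y1' y2' k) ->
  dot3 y0' y1' y2' q0 q1 q2 = 0 -> dot3 y0 y1 y2 q0 q1 q2 = 0.
Proof.
move=> hx hall hM'.
have [e d0 d1 d2] := ext0 q0 q1 q2 (fun k hk => etrans (f_equal (fun t => t - c * cub x0' x1' x2' y0' y1' y2' k) (hall k hk)) (subrr _)).
have z2 : (0:K) ^+ 2 = 0 by rewrite expr2 mul0r.
rewrite E3_lin E3_F E3_F hM' z2 !(mulr0, mul0r, subr0) in e.
rewrite D30_lin D30_F D30_F hM' z2 !(mulr0, mul0r, subr0, addr0) in d0.
rewrite D31_lin D31_F D31_F hM' z2 !(mulr0, mul0r, subr0, addr0) in d1.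
rewrite D32_lin D32_F D32_F hM' z2 !(mulr0, mul0r, subr0, addr0) in d2.
exact: key3 hx e d0 d1 d2.
Qed.

Lemma w3_zero (w0 w1 w2 y0 y1 y2 : K) : [|| y0 != 0, y1 != 0 | y2 != 0] ->
  (forall k, (k < 10)%N -> cub w0 w1 w2 y0 y1 y2 k = 0) -> [/\ w0 = 0, w1 = 0 & w2 = 0].
Proof.
move=> hy h.
have h0 := h 0%N isT; have h1 := h 1%N isT; have h2 := h 2%N isT; have h3 := h 3%N isT.
have h4 := h 4%N isT; have h5 := h 5%N isT; have h7 := h 7%N isT; have h8 := h 8%N isT.
have h9 := h 9%N isT.
rewrite /cub /= in h0 h1 h2 h3 h4 h5 h7 h8 h9.
have canc : forall a b : K, b != 0 -> a * b ^+ 2 = 0 -> a = 0.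
  move=> a b hb /eqP; rewrite mulf_eq0 expf_eq0 /= (negbTE hb) orbF => /eqP //.
case: (eqVneq y0 0) => hy0.
  case: (eqVneq y1 0) => hy1.
    have hy2 : y2 != 0 by move: hy; rewrite hy0 hy1 eqxx.
    have e2 : w2 = 0 by exact: canc h2.
    have e1 : w1 = 0 by apply: (canc _ _ hy2); move: h4; rewrite e2 !(mulr0, mul0r, addr0).
    have e0 : w0 = 0 by apply: (canc _ _ hy2); move: h9; rewrite e2 !(mulr0, mul0r, addr0).
    by [].
  have e1 : w1 = 0 by exact: canc h1.
  have e0 : w0 = 0 by apply: (canc _ _ hy1); move: h3; rewrite e1 !(mulr0, mul0r, addr0).
  have e2 : w2 = 0 by apply: (canc _ _ hy1); move: h8; rewrite e1 !(mulr0, mul0r, addr0).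
  by [].
have e0 : w0 = 0 by exact: canc h0.
have e1 : w1 = 0 by apply: (canc _ _ hy0); move: h7; rewrite e0 !(mulr0, mul0r, addr0).
have e2 : w2 = 0 by apply: (canc _ _ hy0); move: h5; rewrite e0 !(mulr0, mul0r, addr0).
by [].
Qed.

Lemma cub_scaleY x0 x1 x2 y0 y1 y2 d k :
  cub x0 x1 x2 (d * y0) (d * y1) (d * y2) k = d ^+ 2 * cub x0 x1 x2 y0 y1 y2 k.
Proof.
rewrite /cub; case: k => [|[|[|[|[|[|[|[|[|[|k]]]]]]]]]] /=; try ring.
by rewrite nth_nil mulr0.
Qed.
Lemma cub_linX x0 x1 x2 x0' x1' x2' y0 y1 y2 e k :
  cub (x0 - e * x0') (x1 - e * x1') (x2 - e * x2') y0 y1 y2 k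
  = cub x0 x1 x2 y0 y1 y2 k - e * cub x0' x1' x2' y0 y1 y2 k.
Proof.
rewrite /cub; case: k => [|[|[|[|[|[|[|[|[|[|k]]]]]]]]]] /=; try ring.
by rewrite !nth_nil mulr0 subr0.
Qed.

Lemma inj2 x0 x1 x2 y0 y1 y2 x0' x1' x2' y0' y1' y2' c :
  [|| x0 != 0, x1 != 0 | x2 != 0] ->
  [|| y0 != 0, y1 != 0 | y2 != 0] -> [|| y0' != 0, y1' != 0 | y2' != 0] -> c != 0 ->
  (forall k, (k < 7)%N -> cub x0 x1 x2 y0 y1 y2 k = c * cub x0' x1' x2' y0' y1' y2' k) ->
  cub x0 x1 x2 y0 y1 y2 7 - cub x0 x1 x2 y0 y1 y2 8
    = c * (cub x0' x1' x2' y0' y1' y2' 7 - cub x0' x1' x2' y0' y1' y2' 8) ->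
  cub x0 x1 x2 y0 y1 y2 7 - cub x0 x1 x2 y0 y1 y2 9
    = c * (cub x0' x1' x2' y0' y1' y2' 7 - cub x0' x1' x2' y0' y1' y2' 9) ->
  (exists2 e, e != 0 & [/\ x0 = e * x0', x1 = e * x1' & x2 = e * x2']) /\
  (exists2 d, d != 0 & [/\ y0 = d * y0', y1 = d * y1' & y2 = d * y2']).
Proof.
move=> hx hy hy' hc hlow h8 h9.
have hall := step12 hy hy' hlow h8 h9.
have m1 : dot3 y0 y1 y2 y1' (- y0') 0 = 0 by apply: (zeroM hx hall); rewrite /dot3; ring.
have m2 : dot3 y0 y1 y2 y2' 0 (- y0') = 0 by apply: (zeroM hx hall); rewrite /dot3; ring.
have m3 : dot3 y0 y1 y2 0 y2' (- y1') = 0 by apply: (zeroM hx hall); rewrite /dot3; ring.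
have n1 : y0 * y1' - y1 * y0' = 0 by rewrite -m1 /dot3; ring.
have n2 : y0 * y2' - y2 * y0' = 0 by rewrite -m2 /dot3; ring.
have n3 : y1 * y2' - y2 * y1' = 0 by rewrite -m3 /dot3; ring.
have [d hd [e0 e1 e2]] := prop3s hy hy' n1 n2 n3.
split; last by exists d.
have hw : forall k, (k < 10)%N ->
    cub (x0 - c / d^+2 * x0') (x1 - c / d^+2 * x1') (x2 - c / d^+2 * x2') y0' y1' y2' k = 0.
  move=> k hk; rewrite cub_linX; apply: scale_cancel => //.
  by rewrite -cub_scaleY -e0 -e1 -e2 hall.
have [/eqP w0 /eqP w1 /eqP w2] := w3_zero hy' hw.
exists (c / d^+2); first by rewrite mulf_neq0 // invr_eq0 expf_neq0.
by move: w0 w1 w2; rewrite !subr_eq0 => /eqP -> /eqP -> /eqP ->.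
Qed.

Lemma nonvan2 x0 x1 x2 y0 y1 y2 :
  [|| x0 != 0, x1 != 0 | x2 != 0] -> [|| y0 != 0, y1 != 0 | y2 != 0] ->
  (forall k, (k < 7)%N -> cub x0 x1 x2 y0 y1 y2 k = 0) ->
  cub x0 x1 x2 y0 y1 y2 7 - cub x0 x1 x2 y0 y1 y2 8 = 0 ->
  cub x0 x1 x2 y0 y1 y2 7 - cub x0 x1 x2 y0 y1 y2 9 = 0 -> False.
Proof.
move=> hx hy hlow h8 h9.
have hall := @step12 x0 x1 x2 y0 y1 y2 x0 x1 x2 y0 y1 y2 0 hy hy
  (fun k hk => etrans (hlow k hk) (esym (mul0r _))) (etrans h8 (esym (mul0r _)))
  (etrans h9 (esym (mul0r _))).
have [w0 w1 w2] := w3_zero hy (fun k hk => etrans (hall k hk) (mul0r _)).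
by move: hx; rewrite w0 w1 w2 eqxx.
Qed.

Lemma nonvan1 x0 x1 y0 y1 : (x0 != 0) || (x1 != 0) -> (y0 != 0) || (y1 != 0) ->
  P1_0 x0 x1 y0 y1 = 0 -> P1_1 x0 x1 y0 y1 = 0 -> P1_2 x0 x1 y0 y1 = 0 ->
  P1_3 x0 x1 y0 y1 = 0 -> False.
Proof.
move=> hx hy h0 h1 h2 h3; have [w0 w1] := w1_zero hy h0 h1 h2 h3.
by move: hx; rewrite w0 w1 eqxx.
Qed.

End Scal.



Section Conn.
Variable K : numClosedFieldType.

Lemma rv2_nz (u : 'rV[K]_2) : u != 0 -> (u 0 0 != 0) || (u 0 1 != 0).
Proof.
move=> hu; apply: contraNT hu; rewrite negb_or !negbK => /andP [/eqP h0 /eqP h1].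
apply/eqP/rowP => j; rewrite mxE.
by case: (ord2P j) => ->.
Qed.
Lemma rv3_nz (u : 'rV[K]_3) : u != 0 -> [|| u 0 0 != 0, u 0 1 != 0 | u 0 2%:R != 0].
Proof.
move=> hu; apply: contraNT hu; rewrite !negb_or !negbK => /and3P [/eqP h0 /eqP h1 /eqP h2].
apply/eqP/rowP => j; rewrite mxE.
by case: (ord3P j) => ->.
Qed.
Lemma pe2 (u v : 'rV[K]_2) e : e != 0 -> u 0 0 = e * v 0 0 -> u 0 1 = e * v 0 1 -> proj_eq u v.
Proof.
move=> he h0 h1; exists e; split => //; apply/rowP => j; rewrite mxE.
by case: (ord2P j) => ->.
Qed.
Lemma pe3 (u v : 'rV[K]_3) e : e != 0 -> u 0 0 = e * v 0 0 -> u 0 1 = e * v 0 1 ->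
  u 0 2%:R = e * v 0 2%:R -> proj_eq u v.
Proof.
move=> he h0 h1 h2; exists e; split => //; apply/rowP => j; rewrite mxE.
by case: (ord3P j) => ->.
Qed.

Lemma phi_sec1 (x y : 'rV[K]_2) : phi (sec1 K) x y =
  \row_(i < 4) nth 0 [:: P1_0 (x 0 0) (x 0 1) (y 0 0) (y 0 1);
     P1_1 (x 0 0) (x 0 1) (y 0 0) (y 0 1); P1_2 (x 0 0) (x 0 1) (y 0 0) (y 0 1);
     P1_3 (x 0 0) (x 0 1) (y 0 0) (y 0 1)] i.
Proof.
apply/rowP => i; rewrite !mxE /sec1.
case: i => [[|[|[|[|//]]]] H] /=;
rewrite ?(mevalD, mevalM, mevalXU, mevalB, mevalN, mevalC, eval_xvar, eval_yvar, inord_0, inord_1, rmorphXn, mevalMn) //;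
rewrite /P1_0 /P1_1 /P1_2 /P1_3 /pt ?split_l ?split_r ?meval1 ?mevalMn; ring.
Qed.

Lemma phi_sec2 (x y : 'rV[K]_3) : phi (sec2 K) x y =
  let C := cub (x 0 0) (x 0 1) (x 0 2%:R) (y 0 0) (y 0 1) (y 0 2%:R) in
  \row_(i < 9) nth 0 [:: C 0%N; C 1%N; C 2%N; C 3%N; C 4%N; C 5%N; C 6%N;
     C 7%N - C 8%N; C 7%N - C 9%N] i.
Proof.
apply/rowP => i; rewrite !mxE /sec2.
case: i => [[|[|[|[|[|[|[|[|[|//]]]]]]]]] H] /=;
rewrite ?(mevalD, mevalM, mevalXU, mevalB, mevalN, mevalC, eval_xvar, eval_yvar, inord_0, inord_1, inord_2, rmorphXn, mevalMn) //;
rewrite /cub /pt ?split_l ?split_r ?meval1 ?mevalMn /=; ring.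
Qed.

Lemma inj_sec1 : inj_morphism (sec1 K).
Proof.
split.
  move=> x y hx hy; rewrite phi_sec1; apply/negP => /eqP/rowP h.
  have h0 := h (@Ordinal 4 0 isT); have h1 := h (@Ordinal 4 1 isT).
  have h2 := h (@Ordinal 4 2 isT); have h3 := h (@Ordinal 4 3 isT).
  rewrite !mxE /= in h0 h1 h2 h3.
  exact: (nonvan1 (rv2_nz hx) (rv2_nz hy) h0 h1 h2 h3).
move=> x y x' y' hx hy hx' hy' [c [hc]]; rewrite !phi_sec1 => /rowP h.
have h0 := h (@Ordinal 4 0 isT); have h1 := h (@Ordinal 4 1 isT).
have h2 := h (@Ordinal 4 2 isT); have h3 := h (@Ordinal 4 3 isT).
rewrite !mxE /= in h0 h1 h2 h3.
have [[e he [e0 e1]] [d hd [d0 d1]]] := inj1 (rv2_nz hx) (rv2_nz hy) (rv2_nz hy') hc h0 h1 h2 h3.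
by split; [exact: pe2 he e0 e1 | exact: pe2 hd d0 d1].
Qed.

Lemma inj_sec2 : inj_morphism (sec2 K).
Proof.
split.
  move=> x y hx hy; rewrite phi_sec2; apply/negP => /eqP/rowP h.
  have hlow : forall k, (k < 7)%N -> cub (x 0 0) (x 0 1) (x 0 2%:R) (y 0 0) (y 0 1) (y 0 2%:R) k = 0.
    move=> k hk; have := h (@Ordinal 9 k (ltn_trans hk (isT : (7 < 9)%N))); rewrite !mxE /=.
    by case: k hk => [|[|[|[|[|[|[|//]]]]]]].
  have h7 := h (@Ordinal 9 7 isT); have h8 := h (@Ordinal 9 8 isT).
  rewrite !mxE /= in h7 h8.
  exact: (nonvan2 (rv3_nz hx) (rv3_nz hy) hlow h7 h8).
move=> x y x' y' hx hy hx' hy' [c [hc]]; rewrite !phi_sec2 => /rowP h.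
have hlow : forall k, (k < 7)%N ->
   cub (x 0 0) (x 0 1) (x 0 2%:R) (y 0 0) (y 0 1) (y 0 2%:R) k =
   c * cub (x' 0 0) (x' 0 1) (x' 0 2%:R) (y' 0 0) (y' 0 1) (y' 0 2%:R) k.
  move=> k hk; have := h (@Ordinal 9 k (ltn_trans hk (isT : (7 < 9)%N))); rewrite !mxE /=.
  by case: k hk => [|[|[|[|[|[|[|//]]]]]]].
have h7 := h (@Ordinal 9 7 isT); have h8 := h (@Ordinal 9 8 isT).
rewrite !mxE /= in h7 h8.
have [[e he [e0 e1 e2]] [d hd [d0 d1 d2]]] :=
  inj2 (rv3_nz hx) (rv3_nz hy) (rv3_nz hy') hc hlow h7 h8.
by split; [exact: pe3 he e0 e1 e2 | exact: pe3 hd d0 d1 d2].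
Qed.

End Conn.


Section Conn2.
Variable K : numClosedFieldType.
Section BH.
Variables (a b : nat).
Local Notation PP := {mpoly K[a.+1 + b.+1]}.

Lemma bh_add d1 d2 (p q : PP) : bihomog d1 d2 p -> bihomog d1 d2 q -> bihomog d1 d2 (p + q).
Proof. by move=> hp hq m /msuppD_le; rewrite mem_cat => /orP [/hp|/hq]. Qed.
Lemma bh_sub d1 d2 (p q : PP) : bihomog d1 d2 p -> bihomog d1 d2 q -> bihomog d1 d2 (p - q).
Proof. by move=> hp hq m /msuppB_le; rewrite mem_cat => /orP [/hp|/hq]. Qed.
Lemma bh_opp d1 d2 (p : PP) : bihomog d1 d2 p -> bihomog d1 d2 (- p).
Proof. by move=> hp m; rewrite (perm_mem (msuppN p)); apply: hp. Qed.
Lemma bh_mul d1 d2 e1 e2 (p q : PP) : bihomog d1 d2 p -> bihomog e1 e2 q ->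
  bihomog (d1 + e1) (d2 + e2) (p * q).
Proof.
move=> hp hq m /msuppM_le /allpairsP [[m1 m2] [/= h1 h2 ->]].
have [p1 p2] := hp _ h1; have [q1 q2] := hq _ h2.
by split; rewrite -?p1 -?p2 -?q1 -?q2 -big_split /=; apply: eq_bigr => i _; rewrite mnmDE.
Qed.
Lemma bh_x k : bihomog 1 0 (xvar K a b k).
Proof.
move=> m; rewrite /xvar msuppX inE => /eqP ->; split.
  rewrite (bigD1 (inord k)) //= mnm1E eqxx big1 // => i hi.
  by rewrite mnm1E eq_lshift eq_sym (negbTE hi).
by rewrite big1 // => i _; rewrite mnm1E eq_lrshift.
Qed.
Lemma bh_y k : bihomog 0 1 (yvar K a b k).
Proof.
move=> m; rewrite /yvar msuppX inE => /eqP ->; split.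
  by rewrite big1 // => i _; rewrite mnm1E eq_shift.
rewrite (bigD1 (inord k)) //= mnm1E eqxx big1 // => i hi.
by rewrite mnm1E eq_shift eq_sym (negbTE hi).
Qed.
Lemma bh_1 : bihomog 0 0 (1 : PP).
Proof. by move=> m; rewrite msupp1 inE => /eqP ->; split; apply: big1 => i _; rewrite mnm0E. Qed.
Lemma bh_2 : bihomog 0 0 (2%:R : PP).
Proof. by rewrite mulr2n; apply: bh_add; apply: bh_1. Qed.

Lemma bh_mulE d1 d2 e1 e2 f1 f2 (p q : PP) : bihomog d1 d2 p -> bihomog e1 e2 q ->
  (d1 + e1 = f1)%N -> (d2 + e2 = f2)%N -> bihomog f1 f2 (p * q).
Proof. by move=> hp hq <- <-; exact: bh_mul. Qed.
Lemma T1 k j : bihomog 1 2 (xvar K a b k * yvar K a b j ^+ 2).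
Proof.
rewrite expr2; exact: (bh_mulE (bh_x (k:=k)) (bh_mulE (bh_y (k:=j)) (bh_y (k:=j)) (erefl _) (erefl _)) (erefl _) (erefl _)).
Qed.
Lemma T2 k j l : bihomog 1 2 (2%:R * xvar K a b k * yvar K a b j * yvar K a b l).
Proof.
exact: (bh_mulE (bh_mulE (bh_mulE bh_2 (bh_x (k:=k)) (erefl _) (erefl _)) (bh_y (k:=j)) (erefl _) (erefl _)) (bh_y (k:=l)) (erefl _) (erefl _)).
Qed.
End BH.

Ltac bhtac := repeat first [ apply: bh_add | apply: bh_sub | apply: bh_opp | apply: T1 | apply: T2 ].

Lemma bh_sec1 i : bihomog 1 2 (sec1 K i).
Proof. by rewrite /sec1; case: i => [[|[|[|[|//]]]] H] /=; bhtac. Qed.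
Lemma bh_sec2 i : bihomog 1 2 (sec2 K i).
Proof. by rewrite /sec2; case: i => [[|[|[|[|[|[|[|[|[|//]]]]]]]]] H] /=; bhtac. Qed.
End Conn2.


Section LI.
Variable K : numClosedFieldType.

Lemma lin_eval a b k (s : 'I_k -> {mpoly K[a.+1 + b.+1]}) (c : 'I_k -> K) :
  \sum_(i < k) c i *: s i = 0 -> forall x y, \sum_(i < k) c i * (phi s x y) 0 i = 0.
Proof.
move=> h x y; transitivity ((\sum_(i < k) c i *: s i).@[pt x y]); last by rewrite h meval0.
rewrite raddf_sum.
by apply: eq_bigr => i _; rewrite /= mevalZ mxE.
Qed.

Lemma sum4 (F : 'I_4 -> K) : \sum_i F i =
  F (@Ordinal 4 0 isT) + F (@Ordinal 4 1 isT) + F (@Ordinal 4 2 isT) + F (@Ordinal 4 3 isT).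
Proof.
rewrite !big_ord_recl big_ord0 addr0 !addrA.
by congr (_ + _ + _ + _); congr F; apply: val_inj.
Qed.
Lemma sum9 (F : 'I_9 -> K) : \sum_i F i =
  F (@Ordinal 9 0 isT) + F (@Ordinal 9 1 isT) + F (@Ordinal 9 2 isT) + F (@Ordinal 9 3 isT)
  + F (@Ordinal 9 4 isT) + F (@Ordinal 9 5 isT) + F (@Ordinal 9 6 isT) + F (@Ordinal 9 7 isT)
  + F (@Ordinal 9 8 isT).
Proof.
rewrite !big_ord_recl big_ord0 addr0 !addrA.
by congr (_ + _ + _ + _ + _ + _ + _ + _ + _); congr F; apply: val_inj.
Qed.

Definition mk2 (u v : K) : 'rV[K]_2 := \row_(j < 2) nth 0 [:: u; v] j.

Lemma li_sec1 : lin_indep (sec1 K).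
Proof.
move=> c h.
have E := lin_eval h.
have e0 := E (mk2 1 0) (mk2 1 0).
have e1 := E (mk2 0 1) (mk2 1 0).
have e2 := E (mk2 1 0) (mk2 0 1).
have e3 := E (mk2 0 1) (mk2 0 1).
rewrite sum4 phi_sec1 !mxE /= /P1_0 /P1_1 /P1_2 /P1_3 in e0.
rewrite sum4 phi_sec1 !mxE /= /P1_0 /P1_1 /P1_2 /P1_3 in e1.
rewrite sum4 phi_sec1 !mxE /= /P1_0 /P1_1 /P1_2 /P1_3 in e2.
rewrite sum4 phi_sec1 !mxE /= /P1_0 /P1_1 /P1_2 /P1_3 in e3.
move=> i; case: i => [[|[|[|[|//]]]] H]; rewrite (eq_irrelevance H isT).
- by rewrite -e0 !(expr1n, expr2, mul1r, mulr1, mul0r, mulr0, addr0, add0r).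
- by rewrite -e1 !(expr1n, expr2, mul1r, mulr1, mul0r, mulr0, addr0, add0r).
- by rewrite -e2 !(expr1n, expr2, mul1r, mulr1, mul0r, mulr0, addr0, add0r).
- by rewrite -e3 !(expr1n, expr2, mul1r, mulr1, mul0r, mulr0, addr0, add0r).
Qed.

Definition mk3 (u v w : K) : 'rV[K]_3 := \row_(j < 3) nth 0 [:: u; v; w] j.

Lemma li_sec2 : lin_indep (sec2 K).
Proof.
move=> c h.
have E := lin_eval h.
have e0 := E (mk3 1 0 0) (mk3 1 0 0).
have e1 := E (mk3 0 1 0) (mk3 0 1 0).
have e2 := E (mk3 0 0 1) (mk3 0 0 1).
have e3 := E (mk3 1 0 0) (mk3 0 1 0).
have e4 := E (mk3 0 1 0) (mk3 0 0 1).
have e5 := E (mk3 0 0 1) (mk3 1 0 0).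
have e7 := E (mk3 0 1 0) (mk3 1 0 0).
have e8 := E (mk3 0 0 1) (mk3 0 1 0).
have e9 := E (mk3 1 0 0) (mk3 0 0 1).
have e6 := E (mk3 1 0 0) (mk3 0 1 1).
rewrite sum9 phi_sec2 !mxE /= /cub /= in e0.
rewrite sum9 phi_sec2 !mxE /= /cub /= in e1.
rewrite sum9 phi_sec2 !mxE /= /cub /= in e2.
rewrite sum9 phi_sec2 !mxE /= /cub /= in e3.
rewrite sum9 phi_sec2 !mxE /= /cub /= in e4.
rewrite sum9 phi_sec2 !mxE /= /cub /= in e5.
rewrite sum9 phi_sec2 !mxE /= /cub /= in e6.
rewrite sum9 phi_sec2 !mxE /= /cub /= in e7.
rewrite sum9 phi_sec2 !mxE /= /cub /= in e8.
rewrite sum9 phi_sec2 !mxE /= /cub /= in e9.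
rewrite !(expr1n, expr2, mul1r, mulr1, mul0r, mulr0, addr0, add0r, subr0, sub0r, oppr0) in e0.
rewrite !(expr1n, expr2, mul1r, mulr1, mul0r, mulr0, addr0, add0r, subr0, sub0r, oppr0) in e1.
rewrite !(expr1n, expr2, mul1r, mulr1, mul0r, mulr0, addr0, add0r, subr0, sub0r, oppr0) in e2.
rewrite !(expr1n, expr2, mul1r, mulr1, mul0r, mulr0, addr0, add0r, subr0, sub0r, oppr0) in e3.
rewrite !(expr1n, expr2, mul1r, mulr1, mul0r, mulr0, addr0, add0r, subr0, sub0r, oppr0) in e4.
rewrite !(expr1n, expr2, mul1r, mulr1, mul0r, mulr0, addr0, add0r, subr0, sub0r, oppr0) in e5.
rewrite !(expr1n, expr2, mul1r, mulr1, mul0r, mulr0, addr0, add0r, subr0, sub0r, oppr0) in e6.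
rewrite !(expr1n, expr2, mul1r, mulr1, mul0r, mulr0, addr0, add0r, subr0, sub0r, oppr0) in e7.
rewrite !(expr1n, expr2, mul1r, mulr1, mul0r, mulr0, addr0, add0r, subr0, sub0r, oppr0) in e8.
rewrite !(expr1n, expr2, mul1r, mulr1, mul0r, mulr0, addr0, add0r, subr0, sub0r, oppr0) in e9.
rewrite mulrN1 in e8; rewrite mulrN1 in e9; move/eqP: e8; rewrite oppr_eq0 => /eqP e8.
move/eqP: e9; rewrite oppr_eq0 => /eqP e9.
rewrite e3 e9 mul0r add0r addr0 in e6.
move=> i; case: i => [[|[|[|[|[|[|[|[|[|//]]]]]]]]] H]; rewrite (eq_irrelevance H isT) //.
by move/eqP: e6; rewrite mulf_eq0 (negbTE (two_neq0 K)) orbF => /eqP.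
Qed.
End LI.


Section Min.
Variable K : numClosedFieldType.

Lemma prod2 (F : 'I_2 -> K) : \prod_i F i = F (@Ordinal 2 0 isT) * F (@Ordinal 2 1 isT).
Proof. rewrite !big_ord_recl big_ord0 mulr1; congr (_ * _); congr F; exact: val_inj. Qed.
Lemma sum2 (F : 'I_2 -> K) : \sum_i F i = F (@Ordinal 2 0 isT) + F (@Ordinal 2 1 isT).
Proof. rewrite !big_ord_recl big_ord0 addr0; congr (_ + _); congr F; exact: val_inj. Qed.
Lemma sum3 (F : 'I_3 -> K) : \sum_i F i =
  F (@Ordinal 3 0 isT) + F (@Ordinal 3 1 isT) + F (@Ordinal 3 2 isT).
Proof. rewrite !big_ord_recl big_ord0 addr0 !addrA; congr (_ + _ + _); congr F; exact: val_inj. Qed.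
Lemma sum2n (F : 'I_2 -> nat) : (\sum_i F i)%N = (F (@Ordinal 2 0 isT) + F (@Ordinal 2 1 isT))%N.
Proof. rewrite !big_ord_recl big_ord0 addn0; congr (_ + _)%N; congr F; exact: val_inj. Qed.

Lemma o20 : (@Ordinal 2 0 isT) = 0. Proof. exact: val_inj. Qed.
Lemma o21 : (@Ordinal 2 1 isT) = 1. Proof. exact: val_inj. Qed.

Definition vv (l : nat) (y : 'rV[K]_2) := y 0 0 ^+ (2 - l) * y 0 1 ^+ l.
Definition coefA (p : {mpoly K[1.+1 + 1.+1]}) (j l : nat) : K :=
  \sum_(m <- msupp p) p@_m * ((m (lshift 2 1) == j) && (m (rshift 2 1) == l))%:R.

Lemma eval_bh (p : {mpoly K[1.+1 + 1.+1]}) x y : bihomog 1 2 p ->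
  p.@[pt x y] = \sum_(j < 2) \sum_(l < 3) coefA p j l * x 0 j * vv l y.
Proof.
move=> hb; rewrite mevalE.
transitivity (\sum_(m <- msupp p) \sum_(j < 2) \sum_(l < 3)
   p@_m * ((m (lshift 2 1) == j) && (m (rshift 2 1) == l))%:R * x 0 j * vv l y).
  { apply: eq_big_seq => m hm.
  have [h1 h2] := hb m hm.
  rewrite big_split_ord /= !prod2 /pt !split_l !split_r.
  rewrite !sum2n in h1 h2.
  rewrite sum2 !sum3 /vv /= !o20 !o21.
  rewrite !o20 !o21 in h1 h2.
  move: h1 h2; move: (m (lshift 2 0)) (m (lshift 2 1)) (m (rshift 2 0)) (m (rshift 2 1)).
  move=> a0 a1 b0 b1 h1 h2.
  have hB : (b0 = 2 /\ b1 = 0 \/ b0 = 1 /\ b1 = 1 \/ b0 = 0 /\ b1 = 2)%N by lia.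
  have [[e0 e1]|[e0 e1]] : (a0 = 1 /\ a1 = 0 \/ a0 = 0 /\ a1 = 1)%N by lia.
  all: rewrite e0 e1.
  all: case: hB => [[f0 f1]|[[f0 f1]|[f0 f1]]]; rewrite f0 f1 /=; ring. }
rewrite exchange_big /=; apply: eq_bigr => j _.
rewrite exchange_big /=; apply: eq_bigr => l _.
by rewrite /coefA !big_distrl.
Qed.

Lemma kernel_pencil n (B0 B1 : 'M[K]_n.+1) :
  exists x0 x1 : K, exists2 w : 'rV_n.+1, w != 0 &
    ((x0 != 0) || (x1 != 0)) /\ w *m (x0 *: B0 + x1 *: B1) = 0.
Proof.
case: (boolP (\det B0 == 0)) => hd.
  have [w hw hwB] := det0P hd.
  exists 1, 0, w => //; split; first by rewrite oner_eq0.
  by rewrite scale1r scale0r addr0.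
have hu : B0 \in unitmx by rewrite unitmxE unitfE.
have : size (char_poly (B1 *m invmx B0)) != 1 by rewrite size_char_poly.
case/closed_rootP => mu hmu.
have /eigenvalueP [w hw hw0] : eigenvalue (B1 *m invmx B0) mu by rewrite eigenvalue_root_char.
exists (- mu), 1, w => //; split; first by rewrite oner_eq0 orbT.
have e : w *m B1 = mu *: (w *m B0).
  by rewrite -(mulmxKV hu (w *m B1)) -[w *m B1 *m _]mulmxA hw scalemxAl.
by rewrite mulmxDr scale1r -!scalemxAr e scaleNr addNr.
Qed.

Lemma mk2_00 (u v : K) : mk2 u v 0 0 = u. Proof. by rewrite mxE. Qed.
Lemma mk2_01 (u v : K) : mk2 u v 0 1 = v. Proof. by rewrite mxE. Qed.
Lemma mk2_nz (u v : K) : (u != 0) || (v != 0) -> mk2 u v != 0.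
Proof.
move=> h; apply/eqP => /rowP e; move: (e 0) (e 1); rewrite !mxE /= => e0 e1.
by rewrite e0 e1 eqxx in h.
Qed.

Lemma triple (w : 'rV[K]_3) : w != 0 -> exists y y' : 'rV[K]_2, exists a b : K,
  [/\ y != 0, y' != 0, ~ proj_eq y y', a != 0 &
      forall l : 'I_3, a * vv l y + b * vv l y' = w 0 l].
Proof.
move=> /rv3_nz hw.
have v0 : forall u v : K, vv 0 (mk2 u v) = u ^+ 2 by move=> u v; rewrite /vv mk2_00 mk2_01 expr0 mulr1.
have v1 : forall u v : K, vv 1 (mk2 u v) = u * v by move=> u v; rewrite /vv mk2_00 mk2_01 !expr1.
have v2 : forall u v : K, vv 2 (mk2 u v) = v ^+ 2 by move=> u v; rewrite /vv mk2_00 mk2_01 expr0 mul1r.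
have hl : forall (A B : K) (Y Y' : 'rV[K]_2), A * vv 0 Y + B * vv 0 Y' = w 0 0 ->
    A * vv 1 Y + B * vv 1 Y' = w 0 1 -> A * vv 2 Y + B * vv 2 Y' = w 0 2%:R ->
    forall l : 'I_3, A * vv l Y + B * vv l Y' = w 0 l.
  by move=> A B Y Y' f0 f1 f2 l; case: (ord3P l) => ->.
case: (eqVneq (w 0 0) 0) => hk0.
  case: (eqVneq (w 0 2%:R) 0) => hk2.
    have hk1 : w 0 1 != 0 by move: hw; rewrite hk0 hk2 eqxx /= orbF.
    exists (mk2 1 1), (mk2 1 (-1)), (w 0 1 / 2%:R), (- (w 0 1 / 2%:R)).
    split.
    - by apply: mk2_nz; rewrite oner_eq0.
    - by apply: mk2_nz; rewrite oner_eq0.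
    - move=> [c [hc /rowP e]]; move: (e 0) (e 1); rewrite !mxE /= mulr1 => <- /eqP.
      by rewrite mul1r -addr_eq0 -mulr2n (negbTE (two_neq0 K)).
    - by rewrite mulf_neq0 // invr_eq0 two_neq0.
    apply: hl; rewrite ?v0 ?v1 ?v2 ?hk0 ?hk2.
    + by field; rewrite ?(two_neq0 K).
    + by field; rewrite ?(two_neq0 K).
    + by field; rewrite ?(two_neq0 K).
  exists (mk2 (w 0 1 / w 0 2%:R) 1), (mk2 1 0), (w 0 2%:R), (- (w 0 1 ^+ 2 / w 0 2%:R)).
  split.
  - by apply: mk2_nz; rewrite oner_eq0 orbT.
  - by apply: mk2_nz; rewrite oner_eq0.
  - move=> [c [hc /rowP e]]; move: (e 1); rewrite !mxE /= mulr0 => /eqP.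
    by rewrite oner_eq0.
  - by [].
  apply: hl; rewrite ?v0 ?v1 ?v2 ?hk0.
  + by field.
  + by field.
  + by field.
exists (mk2 1 (w 0 1 / w 0 0)), (mk2 0 1), (w 0 0), ((w 0 0 * w 0 2%:R - w 0 1 ^+ 2) / w 0 0).
split.
- by apply: mk2_nz; rewrite oner_eq0.
- by apply: mk2_nz; rewrite oner_eq0 orbT.
- move=> [c [hc /rowP e]]; move: (e 0); rewrite !mxE /= mulr0 => /eqP.
  by rewrite oner_eq0.
- by [].
apply: hl; rewrite ?v0 ?v1 ?v2.
+ by field.
+ by field.
+ by field.
Qed.

Lemma no_inj3 n (hk : (n.+1 <= 3)%N) (s : 'I_n.+1 -> {mpoly K[1.+1 + 1.+1]}) :
  (forall i, bihomog 1 2 (s i)) -> ~ inj_morphism s.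
Proof.
move=> hb [hnz hinj].
pose B (j : nat) : 'M[K]_3 :=
  \matrix_(l < 3, i < 3) (if (i < n.+1)%N then coefA (s (inord i)) j l else 0).
have [x0 [x1 [w hw [hx hwB]]]] := kernel_pencil (B 0%N) (B 1%N).
have [y [y' [a [b [hy hy' hnp ha hvv]]]]] := triple hw.
pose x := mk2 x0 x1.
have hxnz : x != 0 by apply: mk2_nz.
have key : forall i, a * (s i).@[pt x y] + b * (s i).@[pt x y'] = 0.
  move=> i.
  have E : (w *m (x0 *: B 0%N + x1 *: B 1%N)) 0 (widen_ord hk i) = 0 by rewrite hwB mxE.
  rewrite mxE sum3 !mxE /= ltn_ord inord_val -!hvv /= in E.
  rewrite !eval_bh // !sum2 !sum3 /= !mxE /=.
  rewrite -E; ring.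
have hphi : phi s x y = (- b / a) *: phi s x y'.
  apply/rowP => i; rewrite !mxE.
  have := key i; move/eqP; rewrite addr_eq0 => /eqP h.
  by apply: (mulfI ha); rewrite h mulrA (mulrC a) divfK // mulNr.
have hc : - b / a != 0.
  apply/negP => /eqP hc0; move: (hnz x y hxnz hy); rewrite hphi hc0 scale0r eqxx //.
have [_ hyy] := hinj x y x y' hxnz hy hxnz hy' (ex_intro _ (-b/a) (conj hc hphi)).
exact: hnp hyy.
Qed.

Lemma min3 M : injdim_cand K 1 1 M -> (3 <= M)%N.
Proof.
move=> [s [hb [_ hinj]]]; rewrite leqNgt; apply/negP => hM.
exact: (no_inj3 hM hb hinj).
Qed.
End Min.


Theorem proposition4p2 (R : realType) :
  inj_morphism (sec1 R[i]) /\ inj_morphism (sec2 R[i]) /\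
  injdim_O12_eq R[i] 1 1 3 /\ injdim_O12_le R[i] 2 2 8.
Proof.
split; first exact: (inj_sec1 R[i]).
split; first exact: (inj_sec2 R[i]).
split.
  split; last exact: (min3 (K:=R[i])).
  exists (sec1 R[i]); split; first exact: (bh_sec1 (K:=R[i])).
  by split; [exact: (li_sec1 (K:=R[i])) | exact: (inj_sec1 R[i])].
exists 8; split => //.
exists (sec2 R[i]); split; first exact: (bh_sec2 (K:=R[i])).
by split; [exact: (li_sec2 (K:=R[i])) | exact: (inj_sec2 R[i])].
Qed.
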